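(* Let $\eta,\delta\in(0,1)$ and let $G$ be a graph on $n$ vertices whose matrix $\mathbf{G}$ is positive semidefinite. Let $\mathrm{val}_{\mathbf{G}}(\delta)=\max_{\|x\|_2=1,\|x\|_0\le\delta n}x^{\intercal}\mathbf{G}x$. If some $S\subset V$ with $|S|=\delta n$ has $\Phi_G(S)\le\eta$, then $\mathrm{val}_{\mathbf{G}}(\delta)\ge 1-\eta$. If every $S\subset V$ with $|S|\le 2\delta n$ has $\Phi_G(S)\ge 1-\eta$, then $\mathrm{val}_{\mathbf{G}}(\delta)\le\sqrt{1-(1-\eta)^2}$.
   Context: A (edge-weighted, 1-regular) graph $G$ on vertex set $V$ with $|V|=n$ is given by a symmetric matrix $\mathbf{G}$ with nonnegative entries whose rows all sum to $1$. For $S\subset V$, $\Phi_G(S)=\frac{1}{|S|}\sum_{i\in S,j\notin S}\mathbf{G}_{ij}$. $\|x\|_0$ is the number of nonzero entries of $x$. *)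

(* Defs.v *)
From HB Require Import structures.
From mathcomp Require Import all_boot all_order all_algebra.
From mathcomp Require Import classical_sets reals.
Set Implicit Arguments. Unset Strict Implicit. Unset Printing Implicit Defensive.
Import Order.TTheory GRing.Theory Num.Theory.
Local Open Scope ring_scope.

Section Defs.
Variable R : realType.

(* A (edge-weighted, 1-regular) graph on n vertices: symmetric matrix with
   nonnegative entries whose rows sum to 1. *)
Definition is_graph_matrix (n : nat) (G : 'M[R]_n) : Prop :=
  G^T = G /\ (forall i j, 0 <= G i j) /\ (forall i, \sum_j G i j = 1).

Definition psd (n : nat) (G : 'M[R]_n) : Prop :=
  forall x : 'cV[R]_n, 0 <= (x^T *m G *m x) 0 0.

Definition qform (n : nat) (G : 'M[R]_n) (x : 'cV[R]_n) : R := (x^T *m G *m x) 0 0.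

Definition norm2sq (n : nat) (x : 'cV[R]_n) : R := \sum_i x i 0 ^+ 2.
Definition l0 (n : nat) (x : 'cV[R]_n) : nat := #|[set i | x i 0 != 0]|.

Definition Phi (n : nat) (G : 'M[R]_n) (S : {set 'I_n}) : R :=
  (#|S|%:R)^-1 * \sum_(i in S) \sum_(j in ~: S) G i j.

Definition valG (n : nat) (G : 'M[R]_n) (delta : R) : R :=
  reals.sup [set qform G x | x in
     [set x : 'cV[R]_n | norm2sq x = 1 /\ (l0 x)%:R <= delta * n%:R]]%classic.
End Defs.

(* Main.v *)
Require Import Defs.
From HB Require Import structures.
From mathcomp Require Import all_boot all_order all_algebra.
From mathcomp Require Import ring lra.
From mathcomp Require Import reals.
Import Order.TTheory GRing.Theory Num.Theory.
Local Open Scope ring_scope.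

Section Aux.
Variable R : realType.
Variable n : nat.
Variable G : 'M[R]_n.
Hypothesis HG : is_graph_matrix G.

Definition Q (v : 'I_n -> R) := \sum_i \sum_j G i j * (v i * v j).

Lemma qformE (x : 'cV[R]_n) : qform G x = Q (fun i => x i 0).
Proof.
rewrite /qform /Q !mxE exchange_big /=; apply: eq_bigr => j _.
rewrite !mxE big_distrl /=; apply: eq_bigr => i _.
by rewrite !mxE mulrA (mulrC (x i 0)).
Qed.

Lemma Gsym i j : G i j = G j i.
Proof. by case: HG => [HT _]; rewrite -{1}HT mxE. Qed.

Lemma Gge0 i j : 0 <= G i j.
Proof. by case: HG => [_ [H _]]. Qed.

Lemma symsum (f : 'I_n -> 'I_n -> R) :
  \sum_i \sum_j G i j * f i j = \sum_i \sum_j G i j * f j i.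
Proof.
rewrite exchange_big /=; apply: eq_bigr => i _; apply: eq_bigr => j _.
by rewrite Gsym.
Qed.

Lemma rowsum_mul (v : 'I_n -> R) : \sum_i \sum_j G i j * v i = \sum_i v i.
Proof.
apply: eq_bigr => i _; rewrite -big_distrl /=.
by case: HG => [_ [_ ->]]; rewrite mul1r.
Qed.

Lemma sqdiff (v : 'I_n -> R) :
  \sum_i \sum_j G i j * (v i - v j) ^+ 2 = 2 * \sum_i v i ^+ 2 - 2 * Q v.
Proof.
have E : \sum_i \sum_j G i j * (v i - v j) ^+ 2 + 2 * Q v =
  \sum_i \sum_j G i j * v i ^+ 2 + \sum_i \sum_j G i j * v j ^+ 2.
  rewrite /Q big_distrr -!big_split /=; apply: eq_bigr => i _.
  rewrite big_distrr -!big_split /=; apply: eq_bigr => j _.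
  by rewrite sqrrB; ring.
rewrite (symsum (fun i j => v j ^+ 2)) /= !rowsum_mul in E; lra.
Qed.

Lemma sqsum (v : 'I_n -> R) :
  \sum_i \sum_j G i j * (v i + v j) ^+ 2 = 2 * \sum_i v i ^+ 2 + 2 * Q v.
Proof.
have E : \sum_i \sum_j G i j * (v i + v j) ^+ 2 =
  \sum_i \sum_j G i j * v i ^+ 2 + \sum_i \sum_j G i j * v j ^+ 2 + 2 * Q v.
  rewrite /Q big_distrr -!big_split /=; apply: eq_bigr => i _.
  rewrite big_distrr -!big_split /=; apply: eq_bigr => j _.
  by rewrite sqrrD; ring.
rewrite (symsum (fun i j => v j ^+ 2)) /= !rowsum_mul in E; lra.
Qed.


Definition out (S : {set 'I_n}) := \sum_(i in S) \sum_(j in ~: S) G i j.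
Definition F (y : 'I_n -> R) := \sum_i \sum_j G i j * Num.max (y i - y j) 0.

Lemma F_ge0 y : 0 <= F y.
Proof.
apply: sumr_ge0 => i _; apply: sumr_ge0 => j _.
by apply: mulr_ge0; [exact: Gge0 | rewrite le_max lexx orbT].
Qed.

Lemma out_ind (T : {set 'I_n}) :
  \sum_i \sum_j G i j * (if (i \in T) && (j \notin T) then 1 else 0) = out T.
Proof.
rewrite /out [RHS]big_mkcond /=; apply: eq_bigr => i _.
case: ifP => iT /=.
  rewrite [RHS]big_mkcond /=; apply: eq_bigr => j _.
  by rewrite in_setC; case: (j \in T); rewrite ?mulr1 ?mulr0.
by apply: big1 => j _; rewrite mulr0.
Qed.

Lemma coarea (c : R) (U : {set 'I_n}) :
  (forall S, S != set0 -> S \subset U -> c * #|S|%:R <= out S) ->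
  forall y, (forall i, 0 <= y i) -> (forall i, y i != 0 -> i \in U) ->
  c * \sum_i y i <= F y.
Proof.
move=> HU.
suff H : forall k (y : 'I_n -> R), (#|[set i | y i != 0%R]| <= k)%N -> (forall i, 0 <= y i) ->
  (forall i, y i != 0 -> i \in U) -> c * \sum_i y i <= F y.
  by move=> y; apply: (H _ y (leqnn _)).
elim=> [|k IH] y.
  rewrite leqn0 cards_eq0 => /eqP H0 _ _.
  have -> : \sum_i y i = 0.
    apply: big1 => i _; apply/eqP; apply: contraT => Hi.
    by move: H0 => /setP/(_ i); rewrite !inE Hi.
  by rewrite mulr0 F_ge0.
set T := [set i | y i != 0] => Hk Hy HyU.
have y0 i : i \notin T -> y i = 0.
  by rewrite inE negbK => /eqP.
case: (boolP (T == set0)) => [/eqP T0|].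
  have -> : \sum_i y i = 0.
    by apply: big1 => i _; apply: y0; rewrite T0 inE.
  by rewrite mulr0 F_ge0.
case/set0Pn => i0 Hi0.
have [i1 Hi1 Hmin] := @arg_minP _ R _ i0 (mem T) y Hi0.
have Hi1' : i1 \in T by [].
set m := y i1.
have m0 : 0 <= m by apply: Hy.
set y' := fun i => y i - (if i \in T then m else 0).
have Hy' i : 0 <= y' i.
  rewrite /y'; case: ifP => iT; first by rewrite subr_ge0 Hmin.
  by rewrite subr0.
have supp' : [set i | y' i != 0] \subset T :\ i1.
  apply/subsetP => i; rewrite !inE /y'.
  case: ifP => iT.
    have := iT; rewrite inE => ->; rewrite andbT.
    by apply: contraNN => /eqP ->; rewrite subrr.
  by rewrite y0 ?subrr ?eqxx // iT.
have Hk' : (#|[set i | y' i != 0%R]| <= k)%N.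
  have := subset_leq_card supp'.
  move: Hk; rewrite (cardsD1 i1 T) Hi1' add1n ltnS.
  by move=> h1 h2; apply: leq_trans h2 h1.
have HyU' i : y' i != 0 -> i \in U.
  move=> Hi; have : i \in [set i | y' i != 0] by rewrite inE.
  by move/(subsetP supp'); rewrite !inE => /andP [_ /HyU].
have IH' := IH y' Hk' Hy' HyU'.
have Hsum : \sum_i y i = \sum_i y' i + m * #|T|%:R.
  have -> : m * #|T|%:R = \sum_i (if i \in T then m else 0).
    by rewrite -big_mkcond sumr_const mulr_natr.
  by rewrite -big_split /=; apply: eq_bigr => i _; rewrite /y' subrK.
have HF : F y = m * out T + F y'.
  rewrite -out_ind /F big_distrr -big_split /=; apply: eq_bigr => i _.
  rewrite big_distrr -big_split /=; apply: eq_bigr => j _.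
  rewrite mulrCA -mulrDr; congr (_ * _).
  rewrite /y'; case: (boolP (i \in T)) => iT; case: (boolP (j \in T)) => jT /=.
  - by rewrite mulr0 add0r opprB addrA subrK.
  - rewrite mulr1 (y0 _ jT) !subr0 max_l ?Hy // max_l ?Hy' //.
      by rewrite addrC subrK.
    by have := Hy' i; rewrite /y' iT.
    have h1 := Hy j; have h2 : 0 <= y j - m by have := Hy' j; rewrite /y' jT.
    rewrite mulr0 add0r (y0 _ iT) max_r; last lra.
    by rewrite max_r //; lra.
  - by rewrite mulr0 add0r (y0 _ iT) (y0 _ jT) !subr0.
rewrite Hsum HF mulrDr addrC; apply: lerD => //.
rewrite mulrCA; apply: ler_wpM2l => //; apply: HU.
  by apply/set0Pn; exists i0.
by apply/subsetP => i; rewrite inE; apply: HyU.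
Qed.


Lemma part2 (c : R) (v : 'I_n -> R) : 0 < c -> \sum_i v i ^+ 2 = 1 ->
  (forall i, 0 <= v i) -> c <= F (fun i => v i ^+ 2) ->
  Q v <= Num.sqrt (1 - c ^+ 2).
Proof.
move=> c0 nv vge0 HF.
pose P i j := Num.max (v i - v j) 0.
pose B i j := if v j < v i then v i + v j else 0.
have HPB : F (fun i => v i ^+ 2) = \sum_i \sum_j G i j * (P i j * B i j).
  apply: eq_bigr => i _; apply: eq_bigr => j _; congr (_ * _).
  rewrite /P /B; have hi := vge0 i; have hj := vge0 j.
  case: (ltP (v j) (v i)) => hij.
    rewrite max_l; last nra.
    by rewrite max_l; [ring | lra].
  rewrite max_r; last nra.
  by rewrite max_r; [rewrite mul0r | lra].
pose A := \sum_i \sum_j G i j * (P i j) ^+ 2.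
pose Bs := \sum_i \sum_j G i j * (B i j) ^+ 2.
have HA : A = 1 - Q v.
  have : 2 * A = \sum_i \sum_j G i j * (v i - v j) ^+ 2.
    rewrite mulr2n mulrDl mul1r {2}/A.
    rewrite (symsum (fun i j => P i j ^+ 2)) -big_split /=.
    apply: eq_bigr => i _; rewrite -big_split /=; apply: eq_bigr => j _.
    rewrite -mulrDr; congr (_ * _); rewrite /P.
    case: (leP (v j) (v i)) => h.
      rewrite (max_l (x := v i - v j)); last lra.
      by rewrite max_r; [ring | lra].
    rewrite (max_r (x := v i - v j)); last lra.
    by rewrite max_l; [ring | lra].
  rewrite sqdiff nv; lra.
have HB : Bs <= 1 + Q v.
  suff : 2 * Bs <= \sum_i \sum_j G i j * (v i + v j) ^+ 2 by rewrite sqsum nv; lra.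
  rewrite mulr2n mulrDl mul1r {2}/Bs.
  rewrite (symsum (fun i j => B i j ^+ 2)) -big_split /=.
  apply: ler_sum => i _; rewrite -big_split /=; apply: ler_sum => j _.
  rewrite -mulrDr; apply: ler_wpM2l; first exact: Gge0.
  rewrite /B; have hi := vge0 i; have hj := vge0 j.
  case: (ltP (v j) (v i)) => h1; case: (ltP (v i) (v j)) => h2.
  all: rewrite ?expr0n /= ?addr0 ?add0r; try lra; try nra. all: try (rewrite addrC; lra).
have A0 : 0 <= A.
  apply: sumr_ge0 => i _; apply: sumr_ge0 => j _.
  by apply: mulr_ge0; [exact: Gge0 | exact: sqr_ge0].
have B0 : 0 <= Bs.
  apply: sumr_ge0 => i _; apply: sumr_ge0 => j _.
  by apply: mulr_ge0; [exact: Gge0 | exact: sqr_ge0].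
have Hs : forall s, 0 < s -> c <= (s * A + Bs / s) / 2.
  move=> s s0; apply: (le_trans HF); rewrite HPB /A /Bs.
  rewrite big_distrr /= big_distrl /= -big_split /= big_distrl /=.
  apply: ler_sum => i _.
  rewrite big_distrr /= big_distrl /= -big_split /= big_distrl /=.
  apply: ler_sum => j _.
  have e : (s * (G i j * P i j ^+ 2) + G i j * B i j ^+ 2 / s) / 2 -
     G i j * (P i j * B i j) = G i j * ((s * P i j - B i j) ^+ 2 / s / 2).
    by field; rewrite gt_eqF.
  rewrite -subr_ge0 e; apply: mulr_ge0; first exact: Gge0.
  by apply: divr_ge0 => //; apply: divr_ge0 => //; [apply: sqr_ge0 | lra].
case: (leP (Q v) 0) => hQ; first by apply: le_trans hQ (sqrtr_ge0 _).
case: (ltP 0 A) => hA; last first.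
  have A00 : A = 0 by lra.
  have := Hs ((Bs + 1) / c) (divr_gt0 (ltr_pwDr ltr01 B0) c0).
  rewrite A00 mulr0 add0r.
  have -> : Bs / ((Bs + 1) / c) = c * (Bs / (Bs + 1)).
    field; apply/andP; split; rewrite gt_eqF //; lra.
  have : Bs / (Bs + 1) < 1 by rewrite ltr_pdivrMr; lra.
  nra.
have := Hs (c / A) (divr_gt0 c0 hA).
have -> : c / A * A = c by field; rewrite gt_eqF.
have -> : Bs / (c / A) = Bs * A / c.
  by field; apply/andP; split; rewrite gt_eqF.
move=> h.
have h2 : c * c <= Bs * A.
  have : c <= Bs * A / c by lra.
  by rewrite ler_pdivlMr // .
have hq : Q v ^+ 2 <= 1 - c ^+ 2.
  have : Bs * A <= (1 + Q v) * (1 - Q v) by rewrite -HA; apply: ler_wpM2r.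
  nra.
rewrite -(ger0_norm (ltW hQ)) -sqrtr_sqr ler_sqrt //; apply: le_trans (sqr_ge0 _) hq.
Qed.


Lemma Q_le1 (v : 'I_n -> R) : \sum_i v i ^+ 2 = 1 -> Q v <= 1.
Proof.
move=> nv.
have : 0 <= \sum_i \sum_j G i j * (v i - v j) ^+ 2.
  apply: sumr_ge0 => i _; apply: sumr_ge0 => j _.
  by apply: mulr_ge0; [exact: Gge0 | exact: sqr_ge0].
rewrite sqdiff nv; lra.
Qed.

Lemma Q_abs (v : 'I_n -> R) : Q v <= Q (fun i => `|v i|).
Proof.
apply: ler_sum => i _; apply: ler_sum => j _.
apply: ler_wpM2l; first exact: Gge0.
by rewrite -normrM ler_norm.
Qed.

Lemma Phi_out S : S != set0 -> Phi G S * #|S|%:R = out S.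
Proof.
move=> S0; rewrite /Phi /out mulrC mulrA mulfV ?mul1r //.
by rewrite pnatr_eq0 -lt0n card_gt0.
Qed.

Lemma part1v (S : {set 'I_n}) : S != set0 ->
  let r := (Num.sqrt (#|S|%:R))^-1 in
  Q (fun i => if i \in S then r else 0) = 1 - Phi G S /\
  \sum_i (if i \in S then r else 0) ^+ 2 = 1.
Proof.
move=> S0 r.
have s0 : 0 < #|S|%:R :> R by rewrite ltr0n card_gt0.
have r2 : r ^+ 2 = (#|S|%:R)^-1 by rewrite /r exprVn sqr_sqrtr // ltW.
have rs : r ^+ 2 * #|S|%:R = 1 by rewrite r2 mulVf // gt_eqF.
split; last first.
  rewrite (eq_bigr (fun i => if i \in S then r ^+ 2 else 0)); last first.
    by move=> i _; case: ifP => //; rewrite expr0n.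
  by rewrite -big_mkcond sumr_const -mulr_natr.
have w i : \sum_(j in S) G i j = 1 - \sum_(j in ~: S) G i j.
  case: HG => [_ [_ H1]]; have := H1 i; rewrite (bigID (mem S)) /= => h.
  have e : \sum_(j in ~: S) G i j = \sum_(j | j \notin S) G i j.
    by apply: eq_bigl => j; rewrite in_setC.
  rewrite e -h; lra.
have -> : Q (fun i => if i \in S then r else 0) =
   \sum_(i in S) r ^+ 2 * \sum_(j in S) G i j.
  rewrite /Q [RHS]big_mkcond; apply: eq_bigr => i _.
  case: ifP => iS; last by apply: big1 => j _; rewrite mul0r mulr0.
  rewrite big_distrr [RHS]big_mkcond; apply: eq_bigr => j _.
  by case: ifP => jS; rewrite ?mulr0 // mulrC.
rewrite (eq_bigr _ (fun i _ => congr1 (fun t => r ^+ 2 * t) (w i))).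
rewrite -big_distrr /= big_split /= sumr_const sumrN.
rewrite -[X in _ - X]/(out S) -(Phi_out S S0).
rewrite mulrDr mulrN mulr_natr -(mulr_natr 1) mul1r rs; congr (_ - _).
by rewrite -mulr_natr mulrCA rs mulr1.
Qed.

End Aux.
Arguments qformE {R n} G x.
Arguments Q_le1 {R n G} HG v.
Arguments Q_abs {R n G} HG v.
Arguments Phi_out {R n G S}.
Arguments part1v {R n G} HG {S}.
Arguments part2 {R n G} HG {c v}.
Arguments coarea {R n G} HG {c U}.

From mathcomp Require classical_sets.
From Stdlib Require Import Classical.

Theorem theorem4 (R : realType) (n : nat) (G : 'M[R]_n) (eta delta : R) :
  0 < eta < 1 -> 0 < delta < 1 ->
  is_graph_matrix G -> psd G ->
  ((exists S : {set 'I_n}, S != set0 /\ (#|S|%:R = delta * n%:R :> R) /\ Phi G S <= eta) ->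
     1 - eta <= valG G delta)
  /\
  ((forall S : {set 'I_n}, S != set0 -> (#|S|%:R <= 2 * delta * n%:R :> R) ->
       1 - eta <= Phi G S) ->
     valG G delta <= Num.sqrt (1 - (1 - eta) ^+ 2)).
Proof.
move=> /andP[eta0 eta1] /andP[d0 d1] HG _.
rewrite /valG; set E := classical_sets.image _ _.
have ub : forall y, E y -> y <= 1.
  move=> y [x [nx _] <-]; rewrite qformE; apply: Q_le1 => //.
split.
- case=> S [S0 [HS HPhi]].
  have [Hq Hn] := part1v HG S0.
  set r := (Num.sqrt _)^-1 in Hq Hn.
  pose x : 'cV[R]_n := \col_i (if i \in S then r else 0).
  have r0 : r != 0.
    rewrite invr_eq0 sqrtr_eq0 -ltNge ltr0n card_gt0 //.
  have Ex : E (qform G x).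
    exists x => //; split.
      by rewrite /norm2sq -Hn; apply: eq_bigr => i _; rewrite mxE.
    rewrite -HS ler_nat /l0; apply: eq_leq; apply: eq_card => i.
    rewrite !inE mxE; case: ifP => //; by rewrite eqxx.
  apply: le_trans (_ : qform G x <= _).
    have -> : qform G x = 1 - Phi G S.
      rewrite qformE -Hq /Q; apply: eq_bigr => i _; apply: eq_bigr => j _; by rewrite !mxE.
    lra.
  apply: reals.sup_upper_bound => //; split; first by exists (qform G x).
  by exists 1 => y; apply: ub.
- move=> Hall.
  case: (classic (exists y, E y)) => [ne|e]; last first.
    rewrite reals.sup_out ?sqrtr_ge0 //.
    by case.
  apply: reals.ge_sup => // _ [x [nx lx] <-].
  rewrite qformE; apply: le_trans (Q_abs HG _) _.
  set c := 1 - eta.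
  have c0 : 0 < c by rewrite /c; lra.
  set U := [set i | x i 0 != 0].
  apply: (part2 HG c0).
  - by rewrite -nx; apply: eq_bigr => i _; rewrite real_normK // num_real.
  - by move=> i; exact: normr_ge0.
  have HU : forall S, S != set0 -> S \subset U -> c * #|S|%:R <= out R n G S.
    move=> S S0 SU; rewrite -(Phi_out S0).
    apply: ler_wpM2r; first exact: ler0n.
    apply: Hall => //.
    have h1 : (#|S|%:R : R) <= (l0 x)%:R by rewrite ler_nat; apply: subset_leq_card.
    have h2 : 0 <= delta * n%:R by apply: mulr_ge0; [lra | exact: ler0n].
    rewrite -mulrA; lra.
  have := coarea HG HU (fun i => `|x i 0| ^+ 2).
  rewrite (_ : \sum_i `|x i 0| ^+ 2 = 1); last first.
    by rewrite -nx; apply: eq_bigr => i _; rewrite real_normK // num_real.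
  rewrite mulr1; apply.
  + by move=> i; apply: sqr_ge0.
  + move=> i; rewrite inE; apply: contraNN => /eqP ->; by rewrite normr0 expr0n.
Qed.
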